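(* Let $j_1,j_2$ be real numbers and $p\in\{0,1\}$. Let $\Psi_1$ be the generating highest-weight vector, of parity $p$, of a chiral $\mathfrak{sl}(2|1)$-module $[j_1,\mp j_1]$ and $\Psi_2$ the generating vector of the chiral module $[j_2,\pm j_2]$ of opposite chirality (upper signs: $\Psi_1$ left-chiral, $\Psi_2$ right-chiral; lower signs: the reverse). Let $\mathbf U_+=\mathbf V_++\mathbf W_+$. Then for every $n\ge0$, $$n!\sum_{k_1+k_2=2n}\frac{(-1)^{\lfloor (k_1+1-p)/2\rfloor}}{\Gamma\!\left(1+\lfloor\frac{k_1}{2}\rfloor\right)\Gamma\!\left(1+\lfloor\frac{k_2}{2}\rfloor\right)\Gamma\!\left(2j_1+\lfloor\frac{k_1+1}{2}\rfloor\right)\Gamma\!\left(2j_2+\lfloor\frac{k_2+1}{2}\rfloor\right)}\ \mathbf U_+^{k_1}\Psi_1\otimes\mathbf U_+^{k_2}\Psi_2$$ equals $$\sum_{n_1+n_2=n}\binom{n}{n_1}\frac{(-1)^{n_1}}{\Gamma(2j_1+n_1)\Gamma(2j_2+n_2)}\mathbf L_+^{n_1}\Psi_1\otimes\mathbf L_+^{n_2}\Psi_2-(-1)^p\,n\sum_{m_1+m_2=n-1}\binom{n-1}{m_1}\frac{(-1)^{m_1}}{\Gamma(2j_1+1+m_1)\Gamma(2j_2+1+m_2)}\mathbf L_+^{m_1}\mathbf X\Psi_1\otimes\mathbf L_+^{m_2}\mathbf Y\Psi_2,$$ where $(\mathbf X,\mathbf Y)=(\mathbf V_+,\mathbf W_+)$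 for the upper signs and $(\mathbf X,\mathbf Y)=(\mathbf W_+,\mathbf V_+)$ for the lower signs, and the second sum is empty for $n=0$. This vector is a highest-weight vector of $[j_1,\mp j_1]\otimes[j_2,\pm j_2]$ with $\mathbf L$-eigenvalue $j_1+j_2+n$ and $\mathbf B$-eigenvalue $\mp(j_1-j_2)$.
   Context: $\mathfrak{sl}(2|1)$ denotes the complex Lie superalgebra with even basis $\mathbf L_+,\mathbf L_-,\mathbf L,\mathbf B$ and odd basis $\mathbf V_+,\mathbf V_-,\mathbf W_+,\mathbf W_-$, with relations: $[\mathbf L_+,\mathbf L_-]=2\mathbf L$, $[\mathbf L,\mathbf L_\pm]=\pm\mathbf L_\pm$, $\mathbf B$ commutes with $\mathbf L_\pm,\mathbf L$; for $\mathbf X\in\{\mathbf V,\mathbf W\}$: $[\mathbf L,\mathbf X_\pm]=\pm\tfrac12\mathbf X_\pm$, $[\mathbf L_+,\mathbf X_-]=\mathbf X_+$, $[\mathbf L_-,\mathbf X_+]=\mathbf X_-$, $[\mathbf L_+,\mathbf X_+]=[\mathbf L_-,\mathbf X_-]=0$; $[\mathbf B,\mathbf V_\pm]=\tfrac12\mathbf V_\pm$, $[\mathbf B,\mathbf W_\pm]=-\tfrac12\mathbf W_\pm$; $\{\mathbf V_a,\mathbf V_b\}=\{\mathbf W_a,\mathbf W_b\}=0$, $\{\mathbf V_+,\mathbf W_+\}=\mathbf L_+$, $\{\mathbf V_+,\mathbf W_-\}=-\mathbf L+\mathbf B$, $\{\mathbf V_-,\mathbf W_+\}=-\mathbf L-\mathbf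 B$, $\{\mathbf V_-,\mathbf W_-\}=-\mathbf L_-$. The left-chiral module $[J,-J]$ is the $\mathbb Z_2$-graded module generated by a homogeneous vector $\Omega$ with $\mathbf L_-\Omega=\mathbf V_-\Omega=\mathbf W_-\Omega=\mathbf W_+\Omega=0$, $\mathbf L\Omega=J\Omega$, $\mathbf B\Omega=-J\Omega$ (basis $\mathbf L_+^n\Omega,\mathbf L_+^n\mathbf V_+\Omega$); the right-chiral module $[J,J]$ is generated by $\Omega$ with $\mathbf L_-\Omega=\mathbf V_-\Omega=\mathbf W_-\Omega=\mathbf V_+\Omega=0$, $\mathbf L\Omega=J\Omega$, $\mathbf B\Omega=J\Omega$ (basis $\mathbf L_+^n\Omega,\mathbf L_+^n\mathbf W_+\Omega$). A highest-weight vector is one annihilated by $\mathbf L_-,\mathbf V_-,\mathbf W_-$. Tensor products carry the action $G(x\otimes y)=Gx\otimes y+(-1)^{|G||x|}x\otimes Gy$ for homogeneous $G,x$. Here $1/\Gamma$ is understood as the (entire) reciprocal Gamma function, and $\lfloor\cdot\rfloor$ is the floor function. *)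

(* Defs.v *)
From HB Require Import structures.
From mathcomp Require Import all_boot all_order all_algebra.
From mathcomp Require Import all_classical all_reals all_analysis.
Set Implicit Arguments. Unset Strict Implicit. Unset Printing Implicit Defensive.
Import Order.TTheory GRing.Theory Num.Theory numFieldNormedType.Exports.
Local Open Scope ring_scope.

(* Reciprocal Gamma function 1/Gamma (entire), via Gauss' product:     *)
(* valid for every real x (it vanishes at x = 0,-1,-2,...).            *)
Definition rgamma {R : realType} (x : R) : R :=
  limn (fun n : nat => (\prod_(i < n.+1) (x + i%:R)) / (n`!%:R * powR n%:R x)).

Inductive gen := gLp | gLm | gL | gB | gVp | gVm | gWp | gWm.

Definition gen_odd (g : gen) : bool :=
  match g with gVp | gVm | gWp | gWm => true | _ => false end.

(* Chiral modules.  Basis index (n, false) stands for  L_+^n Omega,    *)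
(* (n, true) for L_+^n V_+ Omega (left-chiral [J,-J]) resp.            *)
(* L_+^n W_+ Omega (right-chiral [J,J]).  A vector is given by its     *)
(* actions on the basis, derived from the defining relations:          *)
(*  left-chiral [J,-J], e_n = L_+^n Om, f_n = L_+^n V_+ Om:             *)
(*   L_+ e_n = e_{n+1},  L_+ f_n = f_{n+1}                              *)
(*   L e_n = (J+n) e_n,  L f_n = (J+1/2+n) f_n                          *)
(*   B e_n = -J e_n,     B f_n = (-J+1/2) f_n                           *)
(*   L_- e_n = -n(2J+n-1) e_{n-1},  L_- f_n = -n(2J+n) f_{n-1}          *)
(*   V_+ e_n = f_n,  V_+ f_n = 0;   W_+ e_n = 0,  W_+ f_n = e_{n+1}     *)
(*   V_- e_n = -n f_{n-1}, V_- f_n = 0; W_- e_n = 0, W_- f_n = -(2J+n)e_n*)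
(*  right-chiral [J,J]: the same with V <-> W exchanged and B -> -B.   *)
(* The action on a coefficient vector v gives the coefficient vector    *)
(* of the image.                                                        *)
Definition basis := (nat * bool)%type.
Definition vec (R : realType) := basis -> R.

Definition prevc {R : realType} (v : vec R) (n : nat) (s : bool) : R :=
  match n with 0 => 0 | n'.+1 => v (n', s) end.

(* Action of the odd generators, by role: X_+ is the odd raising generator
   producing the second basis family (V_+ for left-, W_+ for right-chiral),
   Y_+ the other raising one, X_-, Y_- the corresponding lowering ones. *)
Definition actXp {R : realType} (v : vec R) : vec R :=
  fun a => let: (n, s) := a in if s then v (n, false) else 0.
Definition actYp {R : realType} (v : vec R) : vec R :=
  fun a => let: (n, s) := a in if s then 0 else prevc v n true.
Definition actXm {R : realType} (v : vec R) : vec R :=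
  fun a => let: (n, s) := a in
  if s then - n.+1%:R * v (n.+1, false) else 0.
Definition actYm {R : realType} (J : R) (v : vec R) : vec R :=
  fun a => let: (n, s) := a in
  if s then 0 else - (2 * J + n%:R) * v (n, true).

(* left = true : left-chiral module [J,-J];  left = false : right-chiral [J,J] *)
Definition chiral_act {R : realType} (left : bool) (J : R) (g : gen) (v : vec R)
  : vec R :=
  match g with
  | gLp => fun a => let: (n, s) := a in prevc v n s
  | gL  => fun a => let: (n, s) := a in
           (if s then J + 2^-1 + n%:R else J + n%:R) * v (n, s)
  | gB  => fun a => let: (n, s) := a in
           let sB : R := if left then -1 else 1 in
           (if s then sB * J - sB / 2 else sB * J) * v (n, s)
  | gLm => fun a => let: (n, s) := a in
           (if s then - (n.+1%:R * (2 * J + n.+1%:R))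
                 else - (n.+1%:R * (2 * J + n%:R))) * v (n.+1, s)
  | gVp => if left then actXp v else actYp v
  | gWp => if left then actYp v else actXp v
  | gVm => if left then actXm v else actYm J v
  | gWm => if left then actYm J v else actXm v
  end.

Definition Omega {R : realType} : vec R := fun a => if a == (0%N, false) then 1 else 0.

Definition bparity (p : bool) (a : basis) : bool := p (+) a.2.

Definition tvec (R : realType) := basis -> basis -> R.

Definition tens {R : realType} (x y : vec R) : tvec R := fun a1 a2 => x a1 * y a2.

Definition tensor_act {R : realType} (left1 : bool) (J1 : R) (p1 : bool)
  (left2 : bool) (J2 : R) (g : gen) (t : tvec R) : tvec R :=
  fun a1 a2 =>
    chiral_act left1 J1 g (fun b1 => t b1 a2) a1
    + (-1) ^+ (gen_odd g && bparity p1 a1) * chiral_act left2 J2 g (t a1) a2.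

Definition actUp {R : realType} (left : bool) (J : R) (v : vec R) : vec R :=
  fun a => chiral_act left J gVp v a + chiral_act left J gWp v a.

(* Main.v *)
Require Import Defs.
From HB Require Import structures.
From mathcomp Require Import all_boot all_order all_algebra.
From mathcomp Require Import all_classical all_reals all_analysis.
From mathcomp Require Import ring lra zify.
Import Order.TTheory GRing.Theory Num.Theory numFieldNormedType.Exports.
Local Open Scope ring_scope.


Section G.
Local Open Scope classical_set_scope.
Variable R : realType.
Definition gf (x : R) (n : nat) : R :=
  (\prod_(i < n.+1) (x + i%:R)) / (n`!%:R * powR n%:R x).

Lemma rgammaE x : rgamma x = limn (gf x). Proof. by []. Qed.

Lemma lnh n : ln (1 - n.+1%:R^-1) = ln (n%:R : R) - ln n.+1%:R :> R.
Proof.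
case: n => [|n]; first by rewrite invr1 subrr ln0 // ?ln1 subrr.
have -> : 1 - n.+2%:R^-1 = n.+1%:R / n.+2%:R :> R.
  by field.
by rewrite ln_div // posrE ltr0n.
Qed.

Lemma prod_shift x n :
  \prod_(i < n.+2) (x + i%:R) = x * \prod_(i < n.+1) ((x + 1) + i%:R) :> R.
Proof.
rewrite big_ord_recl /= addr0; congr (_ * _); apply: eq_bigr => i _.
by rewrite /bump /= add1n -addn1 natrD; ring.
Qed.

Lemma gf_step x n : (0 < n)%N ->
  gf x n.+1 = gf x n * ((x + n.+1%:R) / n.+1%:R) * expR (x * ln (1 - n.+1%:R^-1)).
Proof.
move=> n0; rewrite lnh /gf big_ord_recr /= factS natrM /powR.
rewrite !pnatr_eq0 /=.
have -> : (n == 0%N) = false by case: n n0.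
rewrite mulrBr expRD expRN.
have h1 : expR (x * ln n%:R) != 0 :> R by rewrite gt_eqF ?expR_gt0.
have h2 : expR (x * ln n.+1%:R) != 0 :> R by rewrite gt_eqF ?expR_gt0.
have h3 : n`!%:R != 0 :> R by rewrite pnatr_eq0 -lt0n fact_gt0.
have h4 : n%:R != 0 :> R by rewrite pnatr_eq0 -lt0n.
field.
by rewrite h1 h2 h3 /= -(natrD _ 1 n) pnatr_eq0.
Qed.

Lemma expR_ln_nat x m : expR ((x + 1) * ln (m.+1%:R : R)) = expR (x * ln m.+1%:R) * m.+1%:R.
Proof. by rewrite mulrDl mul1r expRD lnK // posrE ltr0n. Qed.

Lemma gf_shift x n : (0 < n)%N ->
  gf x n.+1 = x * gf (x + 1) n * expR ((x + 1) * ln (1 - n.+1%:R^-1)).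
Proof.
move=> n0; rewrite lnh /gf prod_shift factS natrM /powR.
rewrite !pnatr_eq0 /=.
have -> : (n == 0%N) = false by case: n n0.
rewrite mulrBr expRD expRN.
case: n n0 => // n _.
rewrite !expR_ln_nat.
have h1 : expR (x * ln n.+1%:R) != 0 :> R by rewrite gt_eqF ?expR_gt0.
have h2 : expR (x * ln n.+2%:R) != 0 :> R by rewrite gt_eqF ?expR_gt0.
have h3 : n.+1`!%:R != 0 :> R by rewrite pnatr_eq0 -lt0n fact_gt0.
have h4 : n.+2%:R != 0 :> R by rewrite pnatr_eq0.
have h5 : n.+1%:R != 0 :> R by rewrite pnatr_eq0.
field.
by rewrite h1 h2 h3 -(natrD _ 2 n) -(natrD _ 1 n) !pnatr_eq0.
Qed.

Lemma hcvg a : (fun n : nat => expR (a * ln (1 - n.+1%:R^-1 : R))) @ \oo --> (1 : R).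
Proof.
have h1 : (fun n : nat => 1 - n.+1%:R^-1 : R) @ \oo --> (1 : R).
  rewrite -[X in _ --> X](subr0 1).
  exact: (cvgB (cvg_cst _) (@cvg_harmonic R)).
have h2 : (fun n : nat => ln (1 - n.+1%:R^-1 : R)) @ \oo --> (0 : R).
  rewrite -[X in _ --> X]ln1; exact: (@continuous_cvg _ _ _ _ _ _ (@ln R) 1 (continuous_ln ltr01) h1).
have h3 : (fun n : nat => a * ln (1 - n.+1%:R^-1 : R)) @ \oo --> (0 : R).
  rewrite -(mulr0 a); exact: cvgMl_tmp.
rewrite -[X in _ --> X]expR0; exact: (@continuous_cvg _ _ _ _ _ _ (@expR R) 0 (@continuous_expR R 0) h3).
Qed.

Lemma gf_ge0 x n : 0 <= x -> 0 <= gf x n.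
Proof.
move=> x0; rewrite /gf divr_ge0 ?mulr_ge0 ?powR_ge0 //.
by apply: prodr_ge0 => i _; rewrite addr_ge0.
Qed.

Lemma gf_decr x n : 0 <= x -> (0 < n)%N -> gf x n.+1 <= gf x n.
Proof.
move=> x0 n0; rewrite gf_step //.
set t : R := n.+1%:R^-1.
have t0 : 0 < t by rewrite invr_gt0 ltr0n.
have t1 : t < 1.
  by rewrite /t invf_lt1 ?ltr0n // ltr1n ltnS.
have e1 : (x + n.+1%:R) / n.+1%:R = 1 + x * t.
  rewrite /t; field; by rewrite -(natrD _ 1 n) pnatr_eq0.
rewrite e1 -mulrA ler_piMr ?gf_ge0 //.
have : 1 + x * t <= expR (x * t) by apply: expR_ge1Dx.
have : t + ln (1 - t) <= 0.
  have := @le_ln1Dx R (- t); rewrite ltrN2 => /(_ t1).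
  rewrite lerNr => H; lra.
move=> Hl He.
apply: (le_trans (ler_wpM2r (ltW (expR_gt0 _)) He)).
rewrite -expRD -mulrDr -[X in _ <= X]expR0 ler_expR.
by rewrite mulr_ge0_le0.
Qed.

Lemma gf_cvg0 x : 0 <= x -> cvgn (gf x).
Proof.
move=> x0.
have H1 : nonincreasing_seq (fun n => gf x n.+1).
  by apply/nonincreasing_seqP => n; apply: gf_decr.
have H2 : has_lbound (range (fun n => gf x n.+1)).
  by exists 0 => _ [n _ <-]; apply: gf_ge0.
have /cvg_ex [l Hl] := nonincreasing_is_cvgn H1 H2.
apply/cvg_ex; exists l; rewrite -cvg_shiftS; exact: Hl.
Qed.

Lemma gf_cvg_rec x : cvgn (gf (x + 1)) -> gf x @ \oo --> x * limn (gf (x + 1)).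
Proof.
move=> c; rewrite -cvg_shiftS.
have E : \forall n \near \oo,
   (fun n => x * gf (x + 1) n * expR ((x + 1) * ln (1 - n.+1%:R^-1))) n = gf x n.+1.
  by exists 1%N => // n /= n1; rewrite gf_shift.
have L : (fun n => x * gf (x + 1) n * expR ((x + 1) * ln (1 - n.+1%:R^-1)))
   @ \oo --> x * limn (gf (x + 1)) * 1.
  apply: cvgM; last exact: hcvg.
  by apply: cvgMl_tmp; exact: c.
rewrite mulr1 in L.
exact: (cvg_trans (near_eq_cvg E) L).
Qed.

Lemma gf_cvg x : cvgn (gf x).
Proof.
suff H : forall m : nat, forall y, - (m%:R) <= y -> cvgn (gf y).
  apply: (H (Num.Def.archi_bound x)).
  by rewrite lerNl ltW // unstable.ltrNbound.
elim=> [|m IH] y hy.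
  by apply: gf_cvg0; move: hy; rewrite oppr0.
apply: cvgP; apply: gf_cvg_rec; apply: IH.
by move: hy; rewrite -natr1 opprD lerBlDr.
Qed.

Lemma rgamma_rec (x : R) : rgamma x = x * rgamma (x + 1).
Proof. rewrite /rgamma -/(gf x) -/(gf (x+1)). have := @gf_cvg_rec x (gf_cvg (x + 1)). exact: cvg_lim. Qed.

Lemma prod_fact m : \prod_(i < m) (1 + i%:R) = m`!%:R :> R.
Proof.
elim: m => [|m IH]; first by rewrite big_ord0.
by rewrite big_ord_recr /= IH factS natrM mulrC -natr1 addrC.
Qed.

Lemma rgamma1 : rgamma (1 : R) = 1.
Proof.
apply: cvg_lim; first exact: Rhausdorff.
rewrite -/(gf 1) -cvg_shiftS.
have E : (fun n => 1 + n.+1%:R^-1) = (fun n => gf 1 n.+1 : R).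
  apply: funext => n; rewrite /gf prod_fact powRr1 // factS natrM.
  have h3 : (n.+1)`!%:R != 0 :> R by rewrite pnatr_eq0 -lt0n fact_gt0.
  field.
  by rewrite h3 -(natrD _ 1 n) !pnatr_eq0.
have L : (fun n => 1 + n.+1%:R^-1) @ \oo --> (1 + 0 : R).
  exact: (cvgD (cvg_cst _) (@cvg_harmonic R)).
rewrite addr0 E in L; exact: L.
Qed.
End G.

Section A.
Variable R : realType.

Definition dl (b : nat * bool) : vec R := fun a => if a == b then 1 else 0.

Lemma OmegaE : (Omega : vec R) = dl (0%N, false). Proof. by []. Qed.

Lemma dlE k s m s1 : dl (k, s) (m, s1) = (s == s1)%:R * (k == m)%:R.
Proof.
rewrite /dl xpair_eqE -natrM mulnb (eq_sym m) (eq_sym s1) andbC.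
by case: (_ && _).
Qed.

Lemma Lp_dl l J m s : chiral_act l J gLp (dl (m, s)) = dl (m.+1, s).
Proof. by apply: funext => -[[|n] s'] //=. Qed.

Lemma iterLp l J k m s : iter k (chiral_act l J gLp) (dl (m, s)) = dl (k + m, s).
Proof. by elim: k => [|k IH]; rewrite ?add0n // iterS IH Lp_dl. Qed.

Lemma Xp_dl m : actXp (dl (m, false)) = dl (m, true) :> vec R.
Proof. by apply: funext => -[n [|]]; rewrite /actXp /dl /= !xpair_eqE ?andbT ?andbF. Qed.

Lemma Up_dl0 l (J : R) m : actUp l J (dl (m, false)) = dl (m, true).
Proof.
apply: funext => -[[|n] [|]]; rewrite /actUp; case: l => //=;
  rewrite /actXp /actYp /prevc /dl /= ?xpair_eqE ?andbT ?andbF ?eqSS ?addr0 ?add0r //.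
Qed.

Lemma Up_dl1 l (J : R) m : actUp l J (dl (m, true)) = dl (m.+1, false).
Proof.
apply: funext => -[[|n] [|]]; rewrite /actUp; case: l => //=;
  rewrite /actXp /actYp /prevc /dl /= ?xpair_eqE ?andbT ?andbF ?eqSS ?addr0 ?add0r //.
Qed.

Lemma iterUp l (J : R) k : iter k (actUp l J) (dl (0%N, false)) = dl (k./2, odd k).
Proof.
elim: k => [|k IH] //; rewrite iterS IH.
have -> : k.+1./2 = (odd k + k./2)%N by rewrite -uphalf_half.
by case h: (odd k); [rewrite Up_dl1 /= h | rewrite Up_dl0 /= h].
Qed.

Lemma dl_half k m s : dl (k./2, odd k) (m, s) = (k == (s + m.*2)%N)%:R.
Proof.
rewrite /dl; have -> : ((m, s) == (k./2, odd k)) = (k == (s + m.*2)%N); last by case: (_ == _).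
apply/eqP/eqP => [[-> ->]|->]; first by rewrite odd_double_half.
by case: s; rewrite /= ?add0n ?add1n ?doubleK /= ?odd_double ?uphalf_double ?doubleK ?half_double ?uphalf_half ?odd_double. 
Qed.

Lemma sum_ind N (F : nat -> R) K :
  \sum_(k < N) F k * ((k : nat) == K)%:R = if (K < N)%N then F K else 0.
Proof.
elim: N => [|N IH]; first by rewrite big_ord0.
rewrite big_ord_recr /= IH.
case: (ltngtP K N) => [h|h|->].
  have -> : (K < N.+1)%N by apply: ltnW.
  by rewrite /= mulr0 addr0.
  have -> : (K < N.+1)%N = false by apply/negbTE; rewrite -leqNgt.
  by rewrite /= mulr0 addr0.
by rewrite ltnSn /= mulr1 add0r.
Qed.

Definition Gr (x : R) (m : nat) : R := rgamma (x + m%:R).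
Arguments Gr : simpl never.
Definition Nf (n : nat) : R := n`!%:R.
Arguments Nf : simpl never.

Definition Wc (j1 j2 : R) (p : bool) (n : nat) : tvec R := fun a1 a2 =>
  let: (m1, s1) := a1 in let: (m2, s2) := a2 in
  if s1 != s2 then 0 else
  if s1 then ((m1 + m2)%N.+1 == n)%:R *
     (Nf n * (-1) ^+ (m1 + ~~ p)%N * Gr 1 m1 * Gr 1 m2
      * Gr (2 * j1) m1.+1 * Gr (2 * j2) m2.+1)
  else ((m1 + m2)%N == n)%:R *
     (Nf n * (-1) ^+ m1 * Gr 1 m1 * Gr 1 m2
      * Gr (2 * j1) m1 * Gr (2 * j2) m2).

Definition coefw (j1 j2 : R) (p : bool) (n k : nat) : R :=
      ((-1) ^+ ((k.+1 - p) %/ 2)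
       * rgamma (1 + (k %/ 2)%:R) * rgamma (1 + (((2 * n) - k) %/ 2)%:R)
       * rgamma (2 * j1 + ((k.+1) %/ 2)%:R)
       * rgamma (2 * j2 + (((2 * n) - k).+1 %/ 2)%:R)).

Lemma w_closed (j1 j2 : R) (p : bool) (n : nat) a1 a2 :
  n`!%:R * \sum_(k < (2 * n).+1) coefw j1 j2 p n k
      * (dl (k./2, odd k) a1 * dl (((2 * n) - k)./2, odd ((2 * n) - k)) a2)
  = Wc j1 j2 p n a1 a2.
Proof.
case: a1 => m1 s1; case: a2 => m2 s2.
under eq_bigr => k _ do rewrite !dl_half [X in _ * X]mulrC mulrA.
rewrite (sum_ind _ (fun k => coefw j1 j2 p n k * ((2 * n - k)%N == (s2 + m2.*2)%N)%:R)).
rewrite /coefw.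
case: s1; case: s2; rewrite /Wc /Gr /Nf /= -?muln2.
  case E : ((m1 + m2).+1 == n); move/eqP: E => E.
    have -> : (1 + m1 * 2 < (2 * n).+1)%N by lia.
    have -> : ((2 * n - (1 + m1 * 2))%N == (1 + m2 * 2)%N) by apply/eqP; lia.
    have -> : (((1 + m1 * 2).+1 - p) %/ 2 = m1 + ~~ p)%N by case: p => /=; lia.
    have -> : ((1 + m1 * 2) %/ 2 = m1)%N by lia.
    have -> : ((2 * n - (1 + m1 * 2)) %/ 2 = m2)%N by lia.
    have -> : ((1 + m1 * 2).+1 %/ 2 = m1.+1)%N by lia.
    have -> : ((2 * n - (1 + m1 * 2)).+1 %/ 2 = m2.+1)%N by lia.
    rewrite /=; ring.
    rewrite mul0r; case: ifP => H; last by rewrite mulr0.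
    have -> : ((2 * n - (1 + m1 * 2))%N == (1 + m2 * 2)%N) = false by apply/eqP; lia.
    by rewrite !mulr0.
  case: ifP => H; last by rewrite mulr0.
  have -> : ((2 * n - (1 + m1 * 2))%N == (0 + m2 * 2)%N) = false by apply/eqP; lia.
  by rewrite !mulr0.
  case: ifP => H; last by rewrite mulr0.
  have -> : ((2 * n - (0 + m1 * 2))%N == (1 + m2 * 2)%N) = false by apply/eqP; lia.
  by rewrite !mulr0.
  case E : (m1 + m2 == n); move/eqP: E => E.
    have -> : (0 + m1 * 2 < (2 * n).+1)%N by lia.
    have -> : ((2 * n - (0 + m1 * 2))%N == (0 + m2 * 2)%N) by apply/eqP; lia.
    have -> : (((0 + m1 * 2).+1 - p) %/ 2 = m1)%N by case: p => /=; lia.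
    have -> : ((0 + m1 * 2) %/ 2 = m1)%N by lia.
    have -> : ((2 * n - (0 + m1 * 2)) %/ 2 = m2)%N by lia.
    have -> : ((0 + m1 * 2).+1 %/ 2 = m1)%N by lia.
    have -> : ((2 * n - (0 + m1 * 2)).+1 %/ 2 = m2)%N by lia.
    rewrite /=; ring.
    rewrite mul0r; case: ifP => H; last by rewrite mulr0.
    have -> : ((2 * n - (0 + m1 * 2))%N == (0 + m2 * 2)%N) = false by apply/eqP; lia.
    by rewrite !mulr0.
Qed.

Lemma Fnat m : rgamma (1 + m%:R : R) = (m`!%:R)^-1.
Proof.
elim: m => [|m IH]; first by rewrite addr0 rgamma1 invr1.
have h := @rgamma_rec R (1 + m%:R); rewrite IH in h.
rewrite -addrA natr1 nat1r in h.
rewrite factS natrM invfM h mulKf //.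
Qed.

Definition coef1 (j1 j2 : R) (n n1 : nat) : R :=
  'C(n, n1)%:R * (-1) ^+ n1 * rgamma (2 * j1 + n1%:R) * rgamma (2 * j2 + (n - n1)%:R).
Definition coef2 (j1 j2 : R) (n m1 : nat) : R :=
  'C(n.-1, m1)%:R * (-1) ^+ m1 * rgamma (2 * j1 + 1 + m1%:R)
   * rgamma (2 * j2 + 1 + (n.-1 - m1)%:R).

Lemma r_closed (j1 j2 : R) (p : bool) (n : nat) a1 a2 :
  \sum_(n1 < n.+1) coef1 j1 j2 n n1 * (dl ((n1 : nat) + 0, false)%N a1 * dl (n - n1 + 0, false)%N a2)
  - (-1) ^+ p * n%:R *
  \sum_(m1 < n) coef2 j1 j2 n m1 * (dl ((m1 : nat) + 0, true)%N a1 * dl (n.-1 - m1 + 0, true)%N a2)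
  = Wc j1 j2 p n a1 a2.
Proof.
case: a1 => m1 s1; case: a2 => m2 s2.
rewrite (eq_bigr (fun k : 'I_n.+1 => (coef1 j1 j2 n k * (false == s1)%:R * (false == s2)%:R
   * ((n - k)%N == m2)%:R) * ((k : nat) == m1)%:R)); last first.
  by move=> k _; rewrite !dlE !addn0; ring.
rewrite (eq_bigr (fun k : 'I_n => (coef2 j1 j2 n k * (true == s1)%:R * (true == s2)%:R
   * ((n.-1 - k)%N == m2)%:R) * ((k : nat) == m1)%:R)); last first.
  by move=> k _; rewrite !dlE !addn0; ring.
rewrite (sum_ind _ (fun k => coef1 j1 j2 n k * (false == s1)%:R * (false == s2)%:R
   * ((n - k)%N == m2)%:R)).
rewrite (sum_ind _ (fun k => coef2 j1 j2 n k * (true == s1)%:R * (true == s2)%:R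
   * ((n.-1 - k)%N == m2)%:R)).
rewrite /coef1 /coef2.
case: s1; case: s2; rewrite /Wc /Gr /Nf /= ?mulr1 ?mulr0 ?mul0r ?if_same ?sub0r ?subr0 ?mulr0 ?oppr0 //.
  case E : ((m1 + m2).+1 == n); move/eqP: E => E.
    rewrite -E /=.
    have -> : (m1 < (m1 + m2).+1)%N by lia.
    have -> : (m1 + m2 - m1 = m2)%N by lia.
    rewrite eqxx mulr1 mul1r !Fnat -(addrA (2 * j1)) -(addrA (2 * j2)) !nat1r.
    have Hb := bin_fact (leq_addr m2 m1).
    rewrite addKn in Hb.
    rewrite factS -Hb !natrM.
    have h1 : (m1`!%:R : R) != 0 by rewrite pnatr_eq0 -lt0n fact_gt0.
    have h2 : (m2`!%:R : R) != 0 by rewrite pnatr_eq0 -lt0n fact_gt0.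
    case: p; rewrite /= ?addn0 ?addn1 ?exprS ?expr1 ?expr0; field; by rewrite h1 h2.
  rewrite /= mul0r; case: ifP => H; last by rewrite mulr0 oppr0.
  have -> : ((n.-1 - m1)%N == m2) = false by apply/eqP; lia.
  by rewrite !mulr0 oppr0.
case E : (m1 + m2 == n); move/eqP: E => E.
  rewrite -E.
  have -> : (m1 < (m1 + m2).+1)%N by lia.
  have -> : (m1 + m2 - m1 = m2)%N by lia.
  rewrite eqxx mulr1 mul1r !Fnat.
  have Hb := bin_fact (leq_addr m2 m1).
  rewrite addKn in Hb.
  rewrite -Hb !natrM.
  have h1 : (m1`!%:R : R) != 0 by rewrite pnatr_eq0 -lt0n fact_gt0.
  have h2 : (m2`!%:R : R) != 0 by rewrite pnatr_eq0 -lt0n fact_gt0.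
  field; by rewrite h1 h2.
rewrite /= mul0r; case: ifP => H; last by rewrite addr0.
have -> : ((n - m1)%N == m2) = false by apply/eqP; lia.
by rewrite !mulr0 addr0.
Qed.

Lemma GS (x : R) m : Gr x m = (x + m%:R) * Gr x m.+1.
Proof. by rewrite /Gr {1}rgamma_rec -addrA natr1. Qed.

End A.

Ltac genall := repeat match goal with
 | |- context [@Gr ?R ?x ?m] => generalize (@Gr R x m); intro
 | |- context [@Nf ?R ?m] => generalize (@Nf R m); intro
 | |- context [GRing.exp ?b ?m] => is_var m; generalize (GRing.exp b m); intro
 | |- context [GRing.natmul (GRing.one ?R) ?m] => is_var m; generalize (GRing.natmul (GRing.one R) m); intro
 end.

Ltac hwt R j1 j2 m1 m2 :=
  rewrite ?mulr0 ?addr0 ?mul0r ?expr0 ?mul1r ?addn0 ?addn1;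
  rewrite ?addSn ?addnS; try (case: eqP => [<-|_]); rewrite ?mulr1n ?mulr0n;
  rewrite ?(@GS R 1 m1) ?(@GS R 1 m1.+1) ?(@GS R 1 m2) ?(@GS R 1 m2.+1)
    ?(@GS R (2 * j1) m1) ?(@GS R (2 * j1) m1.+1) ?(@GS R (2 * j2) m2) ?(@GS R (2 * j2) m2.+1);
  rewrite ?exprS ?expr1 ?expr0
    -?(natr1 (R:=R) m1.+1) -?(natr1 (R:=R) m1) -?(natr1 (R:=R) m2.+1) -?(natr1 (R:=R) m2)
    -?(natr1 (R:=R) (m1 + m2)%N) ?(natrD R m1 m2);
  genall.

Section H.
Variable R : realType.

Lemma hw_Lm (j1 j2 : R) p n upper :
  tensor_act upper j1 p (~~ upper) j2 gLm (@Wc R j1 j2 p n) = fun _ _ => 0.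
Proof.
apply: funext => -[m1 s1]; apply: funext => -[m2 s2].
rewrite /tensor_act /=.
case: upper; case: s1; case: s2; case: p; rewrite /Wc /actXm /actYm /bparity /=.
all: hwt R j1 j2 m1 m2.
Time all: ring.
Qed.

Lemma hw_Vm (j1 j2 : R) p n upper :
  tensor_act upper j1 p (~~ upper) j2 gVm (@Wc R j1 j2 p n) = fun _ _ => 0.
Proof.
apply: funext => -[m1 s1]; apply: funext => -[m2 s2].
rewrite /tensor_act /=.
case: upper; case: s1; case: s2; case: p; rewrite /Wc /actXm /actYm /bparity /=.
all: hwt R j1 j2 m1 m2.
Time all: ring.
Qed.

Lemma hw_Wm (j1 j2 : R) p n upper :
  tensor_act upper j1 p (~~ upper) j2 gWm (@Wc R j1 j2 p n) = fun _ _ => 0.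
Proof.
apply: funext => -[m1 s1]; apply: funext => -[m2 s2].
rewrite /tensor_act /=.
case: upper; case: s1; case: s2; case: p; rewrite /Wc /actXm /actYm /bparity /=.
all: hwt R j1 j2 m1 m2.
Time all: ring.
Qed.

Lemma hw_L (j1 j2 : R) p n upper :
  tensor_act upper j1 p (~~ upper) j2 gL (@Wc R j1 j2 p n)
  = (fun a1 a2 => (j1 + j2 + n%:R) * @Wc R j1 j2 p n a1 a2).
Proof.
apply: funext => -[m1 s1]; apply: funext => -[m2 s2].
rewrite /tensor_act /=.
case: upper; case: s1; case: s2; case: p; rewrite /Wc /actXm /actYm /bparity /=.
all: hwt R j1 j2 m1 m2.
Time all: field.
all: done.
Qed.

Lemma hw_B (j1 j2 : R) p n upper :
  tensor_act upper j1 p (~~ upper) j2 gB (@Wc R j1 j2 p n)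
  = (fun a1 a2 => (if upper then - (j1 - j2) else j1 - j2) * @Wc R j1 j2 p n a1 a2).
Proof.
apply: funext => -[m1 s1]; apply: funext => -[m2 s2].
rewrite /tensor_act /=.
case: upper; case: s1; case: s2; case: p; rewrite /Wc /actXm /actYm /bparity /=.
all: hwt R j1 j2 m1 m2.
Time all: field.
all: done.
Qed.
End H.

(* upper = true : Psi1 generates the left-chiral [j1,-j1], Psi2 the right-chiral
   [j2,j2], (X,Y) = (V_+,W_+);  upper = false : the reverse, (X,Y) = (W_+,V_+).
   p is the parity of Psi1. *)
Theorem mainTheorem2 (R : realType) (j1 j2 : R) (p upper : bool) (n : nat) :
  let act1 := chiral_act upper j1 in
  let act2 := chiral_act (~~ upper) j2 in
  let T := tensor_act upper j1 p (~~ upper) j2 in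
  let Psi1 : vec R := Omega in
  let Psi2 : vec R := Omega in
  let X := if upper then gVp else gWp in
  let Y := if upper then gWp else gVp in
  let w : tvec R := fun a1 a2 =>
    n`!%:R * \sum_(k < (2 * n).+1)
      ((-1) ^+ ((k.+1 - p) %/ 2)
       * rgamma (1 + (k %/ 2)%:R) * rgamma (1 + (((2 * n) - k) %/ 2)%:R)
       * rgamma (2 * j1 + ((k.+1) %/ 2)%:R)
       * rgamma (2 * j2 + (((2 * n) - k).+1 %/ 2)%:R))
      * tens (iter k (actUp upper j1) Psi1)
             (iter ((2 * n) - k) (actUp (~~ upper) j2) Psi2) a1 a2 in
  (w = fun a1 a2 =>
     \sum_(n1 < n.+1)
        'C(n, n1)%:R * (-1) ^+ n1 * rgamma (2 * j1 + n1%:R)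
        * rgamma (2 * j2 + (n - n1)%:R)
        * tens (iter n1 (act1 gLp) Psi1) (iter (n - n1) (act2 gLp) Psi2) a1 a2
     - (-1) ^+ p * n%:R *
       \sum_(m1 < n)
        'C(n.-1, m1)%:R * (-1) ^+ m1 * rgamma (2 * j1 + 1 + m1%:R)
        * rgamma (2 * j2 + 1 + (n.-1 - m1)%:R)
        * tens (iter m1 (act1 gLp) (act1 X Psi1))
               (iter (n.-1 - m1) (act2 gLp) (act2 Y Psi2)) a1 a2)
  /\ T gLm w = (fun _ _ => 0)
  /\ T gVm w = (fun _ _ => 0)
  /\ T gWm w = (fun _ _ => 0)
  /\ T gL w = (fun a1 a2 => (j1 + j2 + n%:R) * w a1 a2)
  /\ T gB w = (fun a1 a2 => (if upper then - (j1 - j2) else j1 - j2) * w a1 a2).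
Proof.
move=> act1 act2 T Psi1 Psi2 X Y w.
have Hw : w = @Wc R j1 j2 p n.
  apply: funext => a1; apply: funext => a2.
  rewrite /w /Psi1 /Psi2 OmegaE.
  under eq_bigr => k _ do rewrite !iterUp.
  exact: w_closed.
have HX : act1 X Psi1 = @dl R (0%N, true).
  rewrite /act1 /X /Psi1 OmegaE; clear -upper; by case: upper; rewrite /= Xp_dl.
have HY : act2 Y Psi2 = @dl R (0%N, true).
  rewrite /act2 /Y /Psi2 OmegaE; clear -upper; by case: upper; rewrite /= Xp_dl.
split.
  rewrite Hw; apply: funext => a1; apply: funext => a2.
  rewrite HX HY -(@r_closed R j1 j2 p n a1 a2).
  congr (_ - _ * _); apply: eq_bigr => k _; rewrite /act1 /act2 /Psi1 /Psi2 ?OmegaE !iterLp //.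
rewrite Hw /T.
split; first exact: hw_Lm.
split; first exact: hw_Vm.
split; first exact: hw_Wm.
split; first exact: hw_L.
exact: hw_B.
Qed.
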